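(* Let $X$ be a compact Hausdorff space, $\mathcal C=C(X)$ with the supremum norm, $\alpha\colon X\to X$ continuous, $\delta f=f\circ\alpha$, and $A$ a transfer operator for $(\mathcal C,\delta)$. For $\varphi\in\mathcal C$ and $n\in\mathbb N$ let $\lambda(\varphi,A)=\lim_{k\to\infty}\frac1k\ln\|(A(e^{\varphi}\,\cdot\,))^k\mathbf 1\|$ and $\lambda(n\varphi,A^n)=\lim_{k\to\infty}\frac1k\ln\|(A^n(e^{n\varphi}\,\cdot\,))^k\mathbf 1\|$ be the logarithms of the spectral radii of the operators $f\mapsto A(e^\varphi f)$ and $f\mapsto A^n(e^{n\varphi}f)$ respectively. Then for all $\varphi\in\mathcal C$ and $n\in\mathbb N$, \[ n\lambda(\varphi,A)\le\lambda(n\varphi,A^n). \]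
   Context: A transfer operator for $(\mathcal C,\delta)$ is a positive linear operator $A\colon\mathcal C\to\mathcal C$ (mapping nonnegative functions to nonnegative functions) with $A((\delta f)g)=f\,Ag$ for all $f,g\in\mathcal C$. $\mathbf 1$ is the constant function $1$. *)

(* Defs.v *)
From HB Require Import structures.
From mathcomp Require Import all_boot all_order all_algebra.
From mathcomp Require Import all_classical all_reals all_analysis.
Set Implicit Arguments. Unset Strict Implicit. Unset Printing Implicit Defensive.
Import Order.TTheory GRing.Theory Num.Theory.
Import numFieldNormedType.Exports.
Local Open Scope classical_set_scope.
Local Open Scope ring_scope.

Definition supnorm (R : realType) (X : Type) (f : X -> R) : R :=
  sup (range (fun x => `|f x|)).

(* transfer operator for (C(X), delta), delta f = f \o alpha,
   with A acting on C(X) (given as a map on X -> R, only its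
   behaviour on continuous functions matters) *)
Definition is_transfer_operator (R : realType) (X : topologicalType)
  (alpha : X -> X) (A : (X -> R) -> (X -> R)) : Prop :=
  [/\ (forall f : X -> R, continuous f -> continuous (A f)),
      (forall (a : R) (f g : X -> R), continuous f -> continuous g ->
          A (fun x => a * f x + g x) = (fun x => a * A f x + A g x)),
      (forall f : X -> R, continuous f -> (forall x, 0 <= f x) -> forall x, 0 <= A f x)
    & (forall f g : X -> R, continuous f -> continuous g ->
          A (fun x => f (alpha x) * g x) = (fun x => f x * A g x))].

Definition weighted (R : realType) (X : Type) (A : (X -> R) -> (X -> R))
  (phi : X -> R) (f : X -> R) : X -> R :=
  A (fun x => expR (phi x) * f x).

(* log of the spectral radius:  lim_k (1/k) ln || T^k 1 ||, in \bar R
   (value -oo when T^k 1 = 0) *)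
Definition log_spec_rad (R : realType) (X : Type)
  (T : (X -> R) -> (X -> R)) : \bar R :=
  limn (fun k : nat =>
    let r := supnorm (iter k T (fun _ => 1%R)) in
    if (0 < r)%R then ((ln r) / k%:R)%R%:E else -oo)%E.

Definition lambda (R : realType) (X : Type) (phi : X -> R)
  (A : (X -> R) -> (X -> R)) : \bar R :=
  log_spec_rad (weighted A phi).

(* Main.v *)
Require Import Defs.
From HB Require Import structures.
From mathcomp Require Import all_boot all_order all_algebra.
From mathcomp Require Import all_classical all_reals all_analysis.
From mathcomp Require Import ring lra zify.
Import Order.TTheory GRing.Theory Num.Theory.
Import numFieldNormedType.Exports.
Local Open Scope classical_set_scope.
Local Open Scope ring_scope.



Section Sn.
Context {R : realType} {X : topologicalType} (hcomp : compact [set: X]).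

Lemma cont_bnd (f : X -> R) : continuous f -> exists M : R, forall x, `|f x| <= M.
Proof.
move=> fc.
have : compact (f @` [set: X]).
  apply: continuous_compact => //; exact: continuous_subspaceT.
move=> /compact_bounded [M [Mreal]] /(_ (`|M| + 1)).
rewrite (le_lt_trans (ler_norm _)) ?ltrDl// => /(_ erefl) aM.
by exists (`|M| + 1) => x; apply: aM; exists x.
Qed.

Lemma snorm_ge (f : X -> R) x : continuous f -> `|f x| <= supnorm f.
Proof.
move=> /cont_bnd [M HM]; apply: sup_upper_bound; last by exists x.
split; first by exists `|f x|, x.
by exists M => _ [y _ <-].
Qed.

Lemma snorm_le (f : X -> R) c : 0 <= c -> (forall x, `|f x| <= c) -> supnorm f <= c.
Proof.
move=> c0 H; rewrite /supnorm.
have [[x _]|nx] := pselect (exists x : X, True).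
  by apply: ge_sup; [exists `|f x|, x|move=> _ [z _ <-]].
suff -> : range (fun x => `|f x|) = set0 by rewrite sup0.
apply/seteqP; split => // y [x _ _]; exfalso; apply: nx; by exists x.
Qed.
End Sn.



Section Op.
Context {R : realType} {X : topologicalType}.
Implicit Types (f g : X -> R) (T : (X -> R) -> (X -> R)).

Definition good T := [/\ (forall f, continuous f -> continuous (T f)),
  (forall a f g, continuous f -> continuous g ->
     T (fun x => a * f x + g x) = (fun x => a * T f x + T g x))
  & (forall f, continuous f -> (forall x, 0 <= f x) -> forall x, 0 <= T f x)].

Definition trans (al : X -> X) T := forall f g, continuous f -> continuous g ->
  T (fun x => f (al x) * g x) = fun x => f x * T g x.

Lemma contD f g : continuous f -> continuous g -> continuous (fun x => f x + g x).
Proof. by move=> fc gc x; apply: cvgD; [exact: fc|exact: gc]. Qed.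
Lemma contM f g : continuous f -> continuous g -> continuous (fun x => f x * g x).
Proof. by move=> fc gc x; apply: cvgM; [exact: fc|exact: gc]. Qed.
Lemma contC (c : R) : continuous (fun _ : X => c).
Proof. by move=> x; exact: cvg_cst. Qed.
Lemma contE f : continuous f -> continuous (fun x => expR (f x)).
Proof. by move=> fc x; apply: continuous_comp; [exact: fc|exact: continuous_expR]. Qed.
Lemma contO (al : X -> X) f : continuous al -> continuous f -> continuous (fun x => f (al x)).
Proof. by move=> ac fc x; apply: continuous_comp; [exact: ac|exact: fc]. Qed.
Lemma contS m (F : nat -> X -> R) : (forall i, continuous (F i)) ->
  continuous (fun x => \sum_(i < m) F i x).
Proof.
move=> Fc; elim: m => [|m IH].
  by under eq_fun do rewrite big_ord0; exact: contC.
under eq_fun do rewrite big_ord_recr /=; exact: contD.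
Qed.
Lemma contI (al : X -> X) k : continuous al -> continuous (iter k al).
Proof. by move=> ac; elim: k => [|k IH] x //=; apply: continuous_comp; [exact: IH|exact: ac]. Qed.

Section G.
Variable T : (X -> R) -> (X -> R).
Hypothesis hT : good T.

Lemma gc f : continuous f -> continuous (T f).
Proof. by move: (hT); rewrite /good => -[c _ _]; exact: c. Qed.
Lemma gpos f : continuous f -> (forall x, 0 <= f x) -> forall x, 0 <= T f x.
Proof. by move: (hT); rewrite /good => -[_ _ p]; exact: p. Qed.
Lemma g0 : T (fun _ => 0) = fun _ => 0.
Proof.
move: (hT); rewrite /good; case => _ hl _.
have := hl (-1) (fun _ => 0) (fun _ => 0) (contC 0) (contC 0).
rewrite (_ : (fun _ => _) = (fun _ => 0)); last by apply: funext => x; rewrite mulr0 addr0.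
move=> ->; apply: funext => x.
by rewrite mulN1r addNr.
Qed.
Lemma gZ (c : R) f : continuous f -> T (fun x => c * f x) = fun x => c * T f x.
Proof.
move: (hT); rewrite /good; case => _ hl _ fc.
have := hl c f (fun _ => 0) fc (contC 0).
rewrite g0 (_ : (fun x => c * f x + 0) = (fun x => c * f x)); last by apply: funext => x; rewrite addr0.
by move=> ->; apply: funext => x; rewrite addr0.
Qed.
Lemma gD f g : continuous f -> continuous g -> T (fun x => f x + g x) = fun x => T f x + T g x.
Proof.
move: (hT); rewrite /good; case => _ hl _ fc gc.
have := hl 1 f g fc gc.
under eq_fun do rewrite mul1r.
by move=> ->; apply: funext => x; rewrite mul1r.
Qed.
Lemma gle f g : continuous f -> continuous g -> (forall x, f x <= g x) ->
  forall x, T f x <= T g x.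
Proof.
move=> fc gc fg x.
have hc : continuous (fun x => g x - f x).
  by apply: contD => //; move=> y; apply: cvgN; exact: fc.
have := gD _ _ hc fc.
rewrite (_ : (fun x => g x - f x + f x) = g); last by apply: funext => y; rewrite subrK.
move=> ->; rewrite lerDr; apply: gpos => // y; rewrite subr_ge0; exact: fg.
Qed.
Lemma gsum m (F : nat -> X -> R) : (forall i, continuous (F i)) ->
  T (fun x => \sum_(i < m) F i x) = fun x => \sum_(i < m) T (F i) x.
Proof.
move=> Fc; elim: m => [|m IH].
  under eq_fun do rewrite big_ord0; rewrite g0.
  by apply: funext => x; rewrite big_ord0.
under eq_fun do rewrite big_ord_recr /=.
rewrite gD //; last exact: contS.
by rewrite IH; apply: funext => x; rewrite big_ord_recr.
Qed.
End G.

Lemma good_iter T k : good T -> good (iter k T).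
Proof.
move=> hT; elim: k => [|k [IHc IHl IHp]].
  by split => //= a f g.
split.
- by move=> f fc /=; apply: gc => //; exact: IHc.
- move=> a f g fc gc' /=; rewrite IHl //.
  by move: (hT); rewrite /good; case => _ hl _; apply: hl; apply: IHc.
- by move=> f fc f0 x /=; apply: gpos => //; [exact: IHc|exact: IHp].
Qed.

Lemma trans_iter T al k : good T -> continuous al -> trans al T ->
  trans (iter k al) (iter k T).
Proof.
move=> hT ac htr; elim: k => [|k IH] f g fc gcc //=.
rewrite (IH (fun y => f (al y)) g) //; last exact: contO.
by rewrite htr //; exact: (gc _ (good_iter _ k hT) _ gcc).
Qed.

Lemma good_weighted T psi : good T -> continuous psi -> good (weighted T psi).
Proof.
move=> hT pc; rewrite /weighted; split.
- by move=> f fc; apply: gc => //; apply: contM => //; exact: contE.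
- move=> a f g fc gc'.
  rewrite (_ : (fun x => expR (psi x) * (a * f x + g x)) =
     (fun x => a * (expR (psi x) * f x) + expR (psi x) * g x)); last first.
    by apply: funext => x; rewrite mulrDr mulrCA.
  by move: (hT); rewrite /good; case => _ hl _; apply: hl; apply: contM => //; exact: contE.
- move=> f fc f0; apply: gpos => //; first by apply: contM => //; exact: contE.
  by move=> x; rewrite mulr_ge0 // expR_ge0.
Qed.

Lemma iter_weighted T al psi m f : good T -> trans al T -> continuous al ->
  continuous psi -> continuous f ->
  iter m (weighted T psi) f =
  iter m T (fun x => expR (\sum_(j < m) psi (iter j al x)) * f x).
Proof.
move=> hT htr ac pc fc; elim: m => [|m IH] /=.
  by apply: funext => x; rewrite big_ord0 expR0 mul1r.
rewrite IH /weighted.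
have hc : continuous (fun x => expR (\sum_(j < m) psi (iter j al x)) * f x).
  apply: contM => //; apply: contE; apply: (contS m (fun j x => psi (iter j al x))) => i; apply: contO => //; exact: contI.
rewrite -(trans_iter _ _ m hT ac htr _ _ (contE _ pc) hc).
congr T; congr (iter m T); apply: funext => x.
by rewrite big_ord_recr /= expRD mulrA [expR _ * expR _]mulrC.
Qed.
End Op.



Section Fek.
Context {R : realType} (r : nat -> R).
Hypothesis r0 : forall k, 0 <= r k.
Hypothesis rsub : forall j m, r (j + m)%N <= r j * r m.

Definition sf k : \bar R := if 0 < r k then (ln (r k) / k%:R)%:E else -oo%E.

Lemma rpow m q p : r (q * m + p)%N <= r m ^+ q * r p.
Proof.
elim: q => [|q IH]; first by rewrite mul0n add0n expr0 mul1r.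
rewrite mulSn -addnA (le_trans (rsub _ _)) // exprS -mulrA.
by rewrite ler_wpM2l.
Qed.

Lemma rzero m j : r m = 0 -> (m <= j)%N -> r j = 0.
Proof.
move=> rm mj; apply/eqP; rewrite eq_le r0 andbT.
by rewrite -(subnKC mj) (le_trans (rsub _ _)) // rm mul0r.
Qed.

Lemma est m : (0 < m)%N -> 0 < r m -> forall e : R, 0 < e ->
  exists N, forall j, (N <= j)%N -> (sf j <= (ln (r m) / m%:R + e)%:E)%E.
Proof.
move=> m0 rm e e0.
set x := ln (r m) / m%:R.
set Rm := 1 + \sum_(p < m) r p.
have Rm1 : 1 <= Rm by rewrite lerDl sumr_ge0.
have Rm0 : 0 < Rm by rewrite (lt_le_trans ltr01).
set K := m%:R * `|x| + ln Rm.
have K0 : 0 <= K by rewrite addr_ge0 ?mulr_ge0 // ln_ge0.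
have [N _ HN] := nbhs_infty_ger (K / e).
exists (N.+1) => j Nj; rewrite /sf; case: ifP => rjp; last by rewrite leNye.
rewrite lee_fin.
have j0 : (0 < j)%N by apply: leq_trans Nj.
have hKj : K / e <= j%:R by apply: HN => /=; apply: leq_trans Nj.
have hp : (j %% m < m)%N by rewrite ltn_mod.
have hRp : r (j %% m) <= Rm.
  rewrite /Rm (bigD1 (Ordinal hp)) //=.
  have : 0 <= \sum_(i < m | i != Ordinal hp) r i by rewrite sumr_ge0.
  lra.
have h1 : r j <= r m ^+ (j %/ m) * Rm.
  rewrite {1}(divn_eq j m) (le_trans (rpow _ _ _)) // ler_wpM2l //.
  by rewrite exprn_ge0.
have h2 : ln (r j) <= (j %/ m)%:R * ln (r m) + ln Rm.
  rewrite -(@ler_ln _ (r j)) in h1; last 2 first.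
  - by rewrite posrE.
  - by rewrite posrE mulr_gt0 // exprn_gt0.
  by rewrite lnM ?posrE ?exprn_gt0 // lnXn // -mulr_natl in h1.
have lnm : ln (r m) = m%:R * x by rewrite /x mulrCA mulfV ?mulr1 // pnatr_eq0 -lt0n.
have h3 : (j %/ m)%:R * ln (r m) <= j%:R * x + m%:R * `|x|.
  rewrite lnm mulrA -natrM.
  have -> : (j %/ m * m)%N = (j - j %% m)%N by rewrite {2}(divn_eq j m) addnK.
  rewrite natrB ?leq_mod // mulrBl.
  rewrite lerD2l -mulNr.
  rewrite (le_trans (ler_norm _)) // normrM normrN ler_wpM2r //.
  by rewrite ger0_norm // ler_nat ltnW.
have jpos : 0 < j%:R :> R by rewrite ltr0n.
rewrite ler_pdivrMr //.
have : K <= e * j%:R by rewrite mulrC -ler_pdivrMr.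
rewrite /K; lra.
Qed.

Lemma fekete : sf @ \oo --> ereal_inf (sf @` [set k | (0 < k)%N]).
Proof.
set l := ereal_inf _.
rewrite -cvg_shiftS; apply: limn_esup_le_cvg; last first.
  by move=> n; apply: ereal_inf_lbound; exists n.+1.
apply: le_ereal_inf_tmp => _ [m /= m0 <-].
have [rm|] := boolP (0 < r m); last first.
  rewrite lt_neqAle r0 andbT negbK => /eqP rm.
  have -> : limn_esup (fun n => sf n.+1) = -oo%E.
    apply: (cvgNy_limn_einf_sup _).2.
    apply/cvgeNyPle => M; exists m => // k /= mk.
    by rewrite /sf (rzero m k.+1 (esym rm) (leq_trans mk (leqnSn _))) ltxx leNye.
  by rewrite leNye.
rewrite /sf rm; apply/lee_addgt0Pr => e e0.
have [N HN] := est m m0 rm e e0.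
rewrite limn_esup_lim; apply: lime_le; first exact: is_cvg_esups.
exists N => // n /= Nn; apply: ge_ereal_sup => _ [k /= nk <-].
rewrite -EFinD; apply: HN.
by rewrite (leq_trans Nn) // (leq_trans nk).
Qed.
End Fek.



Section N.
Context {R : realType} {X : topologicalType} (hcomp : compact [set: X]).

Lemma snorm_ge0 (f : X -> R) : continuous f -> 0 <= supnorm f.
Proof.
move=> fc; have [[x _]|nx] := pselect (exists x : X, True).
  exact: le_trans (normr_ge0 _) (snorm_ge hcomp _ x fc).
rewrite /supnorm; suff -> : range (fun x => `|f x|) = set0 by rewrite sup0.
apply/seteqP; split => // y [x _ _]; exfalso; apply: nx; by exists x.
Qed.

Lemma snorm_pt (f : X -> R) x : continuous f -> f x <= supnorm f.
Proof. by move=> fc; exact: le_trans (ler_norm _) (snorm_ge hcomp _ x fc). Qed.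

Definition cst1 : X -> R := fun _ => 1.

Lemma iter_cont (T : (X -> R) -> (X -> R)) k (f : X -> R) : good T -> continuous f -> continuous (iter k T f).
Proof. by move=> hT fc; exact: (gc _ (good_iter _ k hT) _ fc). Qed.

Lemma iter_pos (T : (X -> R) -> (X -> R)) k (f : X -> R) : good T -> continuous f -> (forall x, 0 <= f x) ->
  forall x, 0 <= iter k T f x.
Proof. by move=> hT fc fp; exact: (gpos _ (good_iter _ k hT) _ fc fp). Qed.

Lemma rsubT (T : (X -> R) -> (X -> R)) : good T -> forall j m,
  supnorm (iter (j + m) T cst1) <= supnorm (iter j T cst1) * supnorm (iter m T cst1).
Proof.
move=> hT j m.
have c1 : continuous cst1 by exact: contC.
have p1 : forall x, 0 <= cst1 x by move=> x; rewrite /cst1 ler01.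
have cm := iter_cont _ m _ hT c1; have cj := iter_cont _ j _ hT c1.
apply: snorm_le; first by rewrite mulr_ge0 // snorm_ge0.
move=> x; rewrite ger0_norm; last exact: iter_pos.
rewrite iterD.
set rm := supnorm (iter m T cst1).
have cR : continuous (fun x : X => rm * cst1 x) by apply: contM; [exact: contC|exact: c1].
have h1 := gle _ (good_iter _ j hT) _ _ cm cR.
rewrite (gZ _ (good_iter _ j hT)) // in h1.
rewrite (le_trans (h1 _ x)) //.
  by move=> y; rewrite /cst1 mulr1; exact: snorm_pt.
rewrite [X in _ <= X]mulrC ler_wpM2l ?snorm_ge0 //; exact: snorm_pt.
Qed.
End N.



Lemma sum_split {R : realType} (g : nat -> R) n K :
  \sum_(l < n * K) g l = \sum_(i < n) \sum_(j < K) g (n * j + i)%N.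
Proof.
elim: K => [|K IH].
  rewrite muln0 big_ord0; apply/esym/big1 => i _; by rewrite big_ord0.
rewrite mulnS addnC big_split_ord /= IH -big_split /=.
by apply: eq_bigr => i _; rewrite big_ord_recr.
Qed.

Lemma amgm {R : realType} n (y : 'I_n -> R) : (0 < n)%N ->
  expR (\sum_(i < n) y i) <= \sum_(i < n) expR (n%:R * y i).
Proof.
case: n y => // n y _.
case: (@arg_maxP _ _ 'I_n.+1 ord0 xpredT y isT) => i0 _ Hm.
apply: (@le_trans _ _ (expR (n.+1%:R * y i0))).
  rewrite ler_expR.
  apply: (@le_trans _ _ (\sum_(i < n.+1) y i0)).
    by apply: ler_sum => i _; exact: Hm.
  by rewrite sumr_const card_ord mulr_natl.
rewrite (bigD1 i0) //= lerDl; apply: sumr_ge0 => i _; exact: expR_ge0.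
Qed.

Section Bound.
Context {R : realType} {X : topologicalType} (hcomp : compact [set: X]).
Variables (alpha : X -> X) (A : (X -> R) -> (X -> R)) (phi : X -> R) (n : nat).
Hypotheses (halpha : continuous alpha) (hA : good A) (htr : trans alpha A)
  (hphi : continuous phi) (hn : (0 < n)%N).

Let psi : X -> R := fun x => n%:R * phi x.
Let T := weighted A phi.
Let B := weighted (iter n A) psi.

Lemma cpsi : continuous psi.
Proof. by apply: contM => //; exact: contC. Qed.

Lemma hB k : iter k B cst1 =
  iter (n * k) A (fun y => expR (\sum_(j < k) psi (iter (n * j) alpha y))).
Proof.
rewrite /B (iter_weighted _ (iter n alpha) _ _ _ (good_iter _ n hA)
   (trans_iter _ _ n hA halpha htr) (contI _ _ halpha) cpsi (contC 1)).
apply: funext => y; rewrite mulnC iterM; congr (iter k (iter n A) _ _).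
apply: funext => x; rewrite /cst1 mulr1; congr expR; apply: eq_bigr => j _.
by rewrite mulnC iterM.
Qed.


Let c1 i := supnorm (iter (n + i) A (fun x => expR (psi (iter i alpha x)))).
Let c2 i := supnorm (iter (n - i) A (fun x => expR (psi x))).
Let F k i x := \sum_(j < k.+2) phi (iter (n * j + i) alpha x).

Lemma cF k i : continuous (F k i).
Proof.
by apply: (contS _ (fun j x => phi (iter (n * j + i) alpha x))) => j; apply: contO => //; exact: contI.
Qed.

Lemma cHk k : continuous (fun y => expR (\sum_(j < k) psi (iter (n * j) alpha y))).
Proof.
apply: contE; apply: (contS _ (fun j y => psi (iter (n * j) alpha y))) => j.
apply: contO; [exact: contI|exact: cpsi].
Qed.

Lemma bound_i k i : (i < n)%N -> forall x,
  iter (n * k.+2) A (fun x => expR (n%:R * F k i x)) x <=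
  c1 i * c2 i * supnorm (iter k B cst1).
Proof.
move=> ilt x.
set h := fun x => expR (n%:R * F k i x).
set E := fun x => expR (psi (iter i alpha x)).
set G := fun y => expR (\sum_(j < k.+1) psi (iter (n * j) alpha y)).
set Hk := fun y => expR (\sum_(j < k) psi (iter (n * j) alpha y)).
set bk := supnorm (iter k B cst1).
have cE : continuous E by apply: contE; apply: contO; [exact: contI|exact: cpsi].
have cG : continuous G by exact: cHk.
have cH : continuous Hk by exact: cHk.
have ch : continuous h by apply: contE; apply: contM; [exact: contC|exact: cF].
have eh : h = fun x => G (iter (n + i) alpha x) * E x.
  apply: funext => y; rewrite /h /G /E /F big_ord_recl mulrDr mulr_sumr expRD mulrC.
  congr (_ * expR _); last by rewrite muln0 add0n.
  congr expR; apply: eq_bigr => j _; rewrite /psi -iterD; congr (_ * phi (iter _ _ _)).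
  rewrite lift0 mulnS; lia.
have s1 : iter (n + i) A h = fun y => G y * iter (n + i) A E y.
  by rewrite eh (trans_iter _ _ (n + i) hA halpha htr).
have s2 : forall y, iter (n + i) A h y <= c1 i * G y.
  move=> y; rewrite s1 mulrC ler_wpM2r //; first exact: expR_ge0.
  by apply: snorm_pt => //; exact: iter_cont.
have s3 : forall y, iter (n * k) A (iter (n + i) A h) y <= c1 i * iter (n * k) A G y.
  move=> y; rewrite (_ : c1 i * iter (n * k) A G y = iter (n * k) A (fun y => c1 i * G y) y); last by rewrite (gZ _ (good_iter _ (n * k) hA)).
  apply: (gle _ (good_iter _ (n * k) hA)) => //; first exact: iter_cont.
  by apply: contM => //; exact: contC.
have eG : G = fun y => expR (psi (iter (n * k) alpha y)) * Hk y.
  by apply: funext => y; rewrite /G /Hk big_ord_recr /= expRD mulrC.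
have s4 : iter (n * k) A G = fun y => expR (psi y) * iter k B cst1 y.
  rewrite eG (trans_iter _ _ (n * k) hA halpha htr (fun z => expR (psi z)) Hk) ?hB //; apply: contE; exact: cpsi.
have c10 : 0 <= c1 i by apply: (snorm_ge0 hcomp); exact: iter_cont.
have bk0 : 0 <= bk.
  by apply: (snorm_ge0 hcomp); apply: iter_cont; [exact: good_weighted (good_iter _ n hA) cpsi|exact: contC].
have cb : continuous (iter k B cst1).
  by apply: iter_cont; [exact: good_weighted (good_iter _ n hA) cpsi|exact: contC].
have cep : continuous (fun y => expR (psi y)) by apply: contE; exact: cpsi.
have s5 : forall y, iter (n * k) A (iter (n + i) A h) y <= (c1 i * bk) * expR (psi y).
  move=> y; rewrite (le_trans (s3 y)) // s4 -mulrA ler_wpM2l // [X in _ <= X]mulrC.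
  by rewrite ler_wpM2l ?expR_ge0 //; apply: snorm_pt.
have s7 : iter (n * k.+2) A h x = iter (n - i) A (iter (n * k) A (iter (n + i) A h)) x.
  by rewrite -!iterD; congr (iter _ A h x); lia.
rewrite s7.
have -> : c1 i * c2 i * bk = (c1 i * bk) * c2 i by rewrite mulrAC.
apply: (@le_trans _ _ (iter (n - i) A (fun y => (c1 i * bk) * expR (psi y)) x)).
  apply: (gle _ (good_iter _ (n - i) hA)) => //.
    by apply: iter_cont => //; apply: iter_cont.
  by apply: contM => //; exact: contC.
rewrite (gZ _ (good_iter _ (n - i) hA)) // ler_wpM2l ?mulr_ge0 //.
by apply: snorm_pt => //; exact: iter_cont.
Qed.

Definition Cst := \sum_(i < n) c1 i * c2 i.

Lemma Cst0 : 0 <= Cst.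
Proof.
apply: sumr_ge0 => i _; apply: mulr_ge0; apply: (snorm_ge0 hcomp); apply: iter_cont => //.
  by apply: contE; apply: contO; [exact: contI|exact: cpsi].
by apply: contE; exact: cpsi.
Qed.

Lemma bound k : supnorm (iter (n * k.+2) T cst1) <= Cst * supnorm (iter k B cst1).
Proof.
have gB : good B by exact: good_weighted (good_iter _ n hA) cpsi.
have gT : good T by exact: good_weighted hA hphi.
have bk0 : 0 <= supnorm (iter k B cst1).
  by apply: (snorm_ge0 hcomp); apply: iter_cont => //; exact: contC.
apply: snorm_le; first by rewrite mulr_ge0 // Cst0.
move=> x; rewrite ger0_norm; last by apply: (iter_pos _ _ _ gT (contC 1)); move=> y; rewrite ler01.
rewrite /T (iter_weighted _ alpha _ _ _ hA htr halpha hphi (contC 1)).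
set N := (n * k.+2)%N.
have cS : continuous (fun x => expR (\sum_(j < N) phi (iter j alpha x)) * cst1 x).
  apply: contM; last exact: contC.
  apply: contE; apply: (contS _ (fun j y => phi (iter j alpha y))) => j.
  apply: contO => //; exact: contI.
have ch : forall i, continuous (fun x => expR (n%:R * F k i x)).
  by move=> i; apply: contE; apply: contM; [exact: contC|exact: cF].
apply: (@le_trans _ _ (iter N A (fun x => \sum_(i < n) expR (n%:R * F k i x)) x)).
  apply: (gle _ (good_iter _ N hA)) => //.
    exact: (contS _ (fun i x => expR (n%:R * F k i x))).
  move=> y; rewrite /cst1 mulr1 /N (sum_split (fun l => phi (iter l alpha y))).
  by move: (amgm _ (fun i : 'I_n => F k i y) hn).
rewrite (gsum _ (good_iter _ N hA) n (fun i x => expR (n%:R * F k i x))) //.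
rewrite /Cst mulr_suml; apply: ler_sum => i _.
exact: bound_i.
Qed.

End Bound.



Theorem lemma1p12 (R : realType) (X : topologicalType)
  (hcomp : compact [set: X]) (hhaus : hausdorff_space X)
  (alpha : X -> X) (halpha : continuous alpha)
  (A : (X -> R) -> (X -> R)) (hA : is_transfer_operator alpha A)
  (phi : X -> R) (hphi : continuous phi) (n : nat) (hn : (0 < n)%N) :
  ((n%:R)%:E * lambda phi A <=
     lambda (fun x => (n%:R * phi x)%R) (iter n A))%E.
Proof.
case: hA => hc hl hp ht.
have gA : good A by split.
have trA : trans alpha A by move=> f g fc gc; exact: ht.
set psi := fun x => n%:R * phi x.
have cpsi : continuous psi by apply: contM => //; exact: contC.
set T := weighted A phi.
set B := weighted (iter n A) psi.
have gT : good T by exact: good_weighted.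
have gB : good B by exact: good_weighted (good_iter _ n gA) cpsi.
set r := fun m => supnorm (iter m T (@cst1 R X)).
set b := fun m => supnorm (iter m B (@cst1 R X)).
have r0 : forall m, 0 <= r m.
  by move=> m; apply: (snorm_ge0 hcomp); apply: iter_cont => //; exact: contC.
have b0 : forall m, 0 <= b m.
  by move=> m; apply: (snorm_ge0 hcomp); apply: iter_cont => //; exact: contC.
have rs : forall j m, r (j + m)%N <= r j * r m by exact: rsubT.
have bs : forall j m, b (j + m)%N <= b j * b m by exact: rsubT.
have E1 : lambda phi A = ereal_inf (sf r @` [set k | (0 < k)%N]).
  exact: (cvg_lim _ (fekete r r0 rs)).
have E2 : lambda psi (iter n A) = ereal_inf (sf b @` [set k | (0 < k)%N]).
  exact: (cvg_lim _ (fekete b b0 bs)).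
rewrite E1 E2.
have hbd : forall k, r (n * k.+2)%N <= Cst alpha A phi n * b k.
  by move=> k; exact: (bound hcomp alpha A phi n halpha gA trA hphi hn k).
have C0 : 0 <= Cst alpha A phi n by exact: (Cst0 hcomp alpha A phi n halpha gA hphi).
set C := Cst alpha A phi n in hbd C0.
have HL : forall m, (0 < m)%N -> (ereal_inf (sf r @` [set k | (0 < k)%N]) <= sf r m)%E.
  by move=> m m0; apply: ereal_inf_lbound; exists m.
move: HL; set L := ereal_inf _ => HL.
apply: le_ereal_inf_tmp => _ [k /= k0 <-].
have Lm : L = -oo%E -> ((n%:R)%:E * L <= sf b k)%E.
  by move=> ->; rewrite gt0_muleNy ?lte_fin ?ltr0n // leNye.
have [bk|] := boolP (0 < b k); last first.
  rewrite lt_neqAle b0 andbT negbK => /eqP bk.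
  apply: Lm; apply/eqP; rewrite -leeNy_eq.
  have := HL (n * k.+2)%N; rewrite muln_gt0 hn /= => /(_ isT).
  have : r (n * k.+2)%N = 0.
    by apply/eqP; rewrite eq_le r0 andbT (le_trans (hbd k)) // -bk mulr0.
  by rewrite /sf => ->; rewrite ltxx.
have bp : forall p, b (k * p.+1)%N <= b k ^+ p.+1.
  elim=> [|p IH]; first by rewrite muln1 expr1.
  rewrite mulnS addnC (le_trans (bs _ _)) // exprSr ler_wpM2r //.
case EL: L HL Lm => [y| |] HL Lm; last by apply: Lm.
  2: by have := HL 1%N isT; rewrite /sf; case: ifP.
rewrite /sf bk -EFinM lee_fin.
have key : forall P : nat,
    y * (n * (k * P.+1).+2)%:R <= ln C + P.+1%:R * ln (b k).
  move=> P; set m := (n * (k * P.+1).+2)%N.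
  have h1 : r m <= C * b k ^+ P.+1.
    by rewrite (le_trans (hbd _)) // ler_wpM2l.
  have m0 : (0 < m)%N by rewrite /m muln_gt0 hn.
  have := HL m m0; rewrite /sf; case: ifP => rm; last by [].
  rewrite lee_fin ler_pdivlMr ?ltr0n // => hy.
  have Cb : 0 < C * b k ^+ P.+1 by exact: lt_le_trans rm h1.
  have C0' : 0 < C by move: Cb; rewrite pmulr_lgt0 // exprn_gt0.
  rewrite (le_trans hy) // mulr_natl -(lnXn _ bk) -lnM ?posrE ?exprn_gt0 //.
  by rewrite ler_ln ?posrE.
set x := ln (b k) / k%:R.
have k0' : 0 < k%:R :> R by rewrite ltr0n.
have lnb : ln (b k) = k%:R * x by rewrite /x mulrCA mulfV ?mulr1 // gt_eqF.
rewrite leNgt; apply/negP => hlt.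
set d := n%:R * y - x.
have d0 : 0 < d by rewrite /d subr_gt0.
set Q := `|ln C - 2 * (n%:R * y)| / (k%:R * d).
have Q0 : 0 <= Q by rewrite /Q divr_ge0 // mulr_ge0 // ltW.
have hP := archi_boundP Q0.
move: hP; set P := Num.bound Q => hP.
have := key P.
have e : y * (n * (k * P.+1).+2)%:R = P.+1%:R * (k%:R * (n%:R * y)) + 2 * (n%:R * y).
  by rewrite -addn2 natrM natrD natrM; ring.
rewrite e lnb => kP.
have hQ : `|ln C - 2 * (n%:R * y)| < (P.+1)%:R * (k%:R * d).
  rewrite -ltr_pdivrMr ?mulr_gt0 //; apply: lt_le_trans hP _.
  by rewrite ler_nat.
have e2 : P.+1%:R * (k%:R * d) = P.+1%:R * (k%:R * (n%:R * y)) - P.+1%:R * (k%:R * x).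
  by rewrite /d; ring.
have := ler_norm (ln C - 2 * (n%:R * y)).
lra.
Qed.
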